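(* Let $E/\mathbb{Q}$ be given by the model $y^2=x^3+Ax+B$ ($A,B\in\mathbb{Z}$) described in the context and $X=\max\{|A|^3,|B|^2\}$. Let $P,Q\in E(\mathbb{Q})$ satisfy $X^{1/6}\le x(P)<x(Q)$ and $x(P)=x_1/s$, $x(Q)=x_2/s$ with $x_1,x_2\in\mathbb{Z}$, $s$ a positive integer, and $\gcd(x_1,s)=\gcd(x_2,s)=1$. Then $h(P+Q)\le h(P)+2h(Q)+2.9$.
   Context: The model is obtained from a global minimal Weierstrass equation of $E$ by the substitution $x\mapsto \frac{1}{36}(x-3b_2)$, $y\mapsto \frac12(\frac{y}{108}-\frac{a_1}{36}(x-3b_2)-a_3)$. $h$ is the absolute logarithmic Weil height and $h(P)=h(x(P))$. *)

(* Defs.v *)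
From HB Require Import structures.
From mathcomp Require Import all_boot all_order all_algebra.
From mathcomp Require Import all_classical all_reals all_analysis.
Set Implicit Arguments. Unset Strict Implicit. Unset Printing Implicit Defensive.
Import Order.TTheory GRing.Theory Num.Theory.
Local Open Scope ring_scope.

(* Standard quantities attached to a Weierstrass equation
   y^2 + a1 xy + a3 y = x^3 + a2 x^2 + a4 x + a6 (Silverman, III.1). *)
Section WeierstrassQuantities.
Variable K : comNzRingType.
Definition wb2 (a1 a2 a3 a4 a6 : K) : K := a1 ^+ 2 + 4%:R * a2.
Definition wb4 (a1 a2 a3 a4 a6 : K) : K := 2%:R * a4 + a1 * a3.
Definition wb6 (a1 a2 a3 a4 a6 : K) : K := a3 ^+ 2 + 4%:R * a6.
Definition wb8 (a1 a2 a3 a4 a6 : K) : K :=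
  a1 ^+ 2 * a6 + 4%:R * a2 * a6 - a1 * a3 * a4 + a2 * a3 ^+ 2 - a4 ^+ 2.
Definition wc4 (a1 a2 a3 a4 a6 : K) : K :=
  wb2 a1 a2 a3 a4 a6 ^+ 2 - 24%:R * wb4 a1 a2 a3 a4 a6.
Definition wc6 (a1 a2 a3 a4 a6 : K) : K :=
  - wb2 a1 a2 a3 a4 a6 ^+ 3 + 36%:R * wb2 a1 a2 a3 a4 a6 * wb4 a1 a2 a3 a4 a6
  - 216%:R * wb6 a1 a2 a3 a4 a6.
Definition wdisc (a1 a2 a3 a4 a6 : K) : K :=
  - wb2 a1 a2 a3 a4 a6 ^+ 2 * wb8 a1 a2 a3 a4 a6 - 8%:R * wb4 a1 a2 a3 a4 a6 ^+ 3
  - 27%:R * wb6 a1 a2 a3 a4 a6 ^+ 2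
  + 9%:R * wb2 a1 a2 a3 a4 a6 * wb4 a1 a2 a3 a4 a6 * wb6 a1 a2 a3 a4 a6.
End WeierstrassQuantities.

Definition is_intq (q : rat) : bool := denq q == 1.

(* Coefficients of the equation obtained by the change of variables
   x = u^2 x' + r, y = u^3 y' + s u^2 x' + t (Silverman, Table 3.1). *)
Definition tr_a1 (a1 a2 a3 a4 a6 u r s t : rat) : rat := (a1 + 2%:R * s) / u.
Definition tr_a2 (a1 a2 a3 a4 a6 u r s t : rat) : rat :=
  (a2 - s * a1 + 3%:R * r - s ^+ 2) / u ^+ 2.
Definition tr_a3 (a1 a2 a3 a4 a6 u r s t : rat) : rat :=
  (a3 + r * a1 + 2%:R * t) / u ^+ 3.
Definition tr_a4 (a1 a2 a3 a4 a6 u r s t : rat) : rat :=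
  (a4 - s * a3 + 2%:R * r * a2 - (t + r * s) * a1 + 3%:R * r ^+ 2
   - 2%:R * s * t) / u ^+ 4.
Definition tr_a6 (a1 a2 a3 a4 a6 u r s t : rat) : rat :=
  (a6 + r * a4 + r ^+ 2 * a2 + r ^+ 3 - t * a3 - t ^+ 2 - r * t * a1) / u ^+ 6.

(* (a1,...,a6) is a global minimal Weierstrass equation (over Q) of the
   elliptic curve it defines: integral, nonsingular, and its discriminant
   has minimal absolute value among all integral Weierstrass equations of
   the same curve (i.e. Q-isomorphic via an admissible change of variables). *)
Definition global_minimal (a1 a2 a3 a4 a6 : int) : Prop :=
  wdisc a1 a2 a3 a4 a6 != 0 /\
  forall u r s t : rat, u != 0 ->
    let b1 := tr_a1 a1%:~R a2%:~R a3%:~R a4%:~R a6%:~R u r s t in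
    let b2 := tr_a2 a1%:~R a2%:~R a3%:~R a4%:~R a6%:~R u r s t in
    let b3 := tr_a3 a1%:~R a2%:~R a3%:~R a4%:~R a6%:~R u r s t in
    let b4 := tr_a4 a1%:~R a2%:~R a3%:~R a4%:~R a6%:~R u r s t in
    let b6 := tr_a6 a1%:~R a2%:~R a3%:~R a4%:~R a6%:~R u r s t in
    [&& is_intq b1, is_intq b2, is_intq b3, is_intq b4 & is_intq b6] ->
    `|(wdisc a1 a2 a3 a4 a6)%:~R : rat| <= `|wdisc b1 b2 b3 b4 b6|.

(* Short model y^2 = x^3 + A x + B obtained from the minimal model by
   x |-> (x - 3 b2)/36, y |-> (y/108 - a1 (x - 3 b2)/36 - a3)/2:
   A = -27 c4, B = -54 c6. *)
Definition shortA (a1 a2 a3 a4 a6 : int) : int := - 27%:R * wc4 a1 a2 a3 a4 a6.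
Definition shortB (a1 a2 a3 a4 a6 : int) : int := - 54%:R * wc6 a1 a2 a3 a4 a6.

Inductive point := Inf | Aff of rat & rat.

Definition on_curve (A B : rat) (P : point) : bool :=
  if P is Aff x y then y ^+ 2 == x ^+ 3 + A * x + B else true.

Definition addE (A B : rat) (P Q : point) : point :=
  match P, Q with
  | Inf, _ => Q
  | _, Inf => P
  | Aff x1 y1, Aff x2 y2 =>
      if (x1 == x2) && (y1 == - y2) then Inf else
      let l := if x1 == x2 then (3%:R * x1 ^+ 2 + A) / (2%:R * y1)
               else (y2 - y1) / (x2 - x1) in
      let x3 := l ^+ 2 - x1 - x2 in
      Aff x3 (l * (x1 - x3) - y1)
  end.

Definition hrat (R : realType) (q : rat) : R :=
  ln (Num.max (`|numq q|%:~R) ((denq q)%:~R)).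

Definition hpt (R : realType) (P : point) : R :=
  if P is Aff x _ then hrat R x else 0.

(* Main.v *)
Require Import Defs.
From HB Require Import structures.
From mathcomp Require Import all_boot all_order all_algebra.
From mathcomp Require Import all_classical all_reals all_analysis.
From mathcomp Require Import ring lra.
Import Order.TTheory GRing.Theory Num.Theory.
Local Open Scope ring_scope.

Lemma ratE (x : rat) : x = (numq x)%:~R / (denq x)%:~R.
Proof. by rewrite divq_num_den. Qed.

Lemma rat_den_bound (x : rat) (N D : int) : 0 < D ->
  x * D%:~R = N%:~R -> denq x <= D /\ `|numq x| <= `|N|.
Proof.
move=> D0 hx.
have d0 := denq_gt0 x.
have e : numq x * D = N * denq x.
  apply: (@intr_inj rat); rewrite !intrM -hx.
  have hxe := ratE x.
  move: (numq x) (denq x) d0 hxe => n d d0 ->.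
  have : d%:~R != 0 :> rat by rewrite intr_eq0 gt_eqF.
  by move=> h; field.
have dD : (denq x %| D)%Z.
  have : (denq x %| N * denq x)%Z by apply: dvdz_mull; apply: dvdzz.
  rewrite -e mulrC Gauss_dvdzl //.
  by rewrite coprimezE coprime_sym coprime_num_den.
have ddD : denq x <= D.
  move: dD; rewrite dvdzE => /dvdn_leq.
  have : (0 < `|D|)%N by rewrite absz_gt0 gt_eqF.
  move=> h /(_ h); rewrite -lez_nat !abszE !gtr0_norm //.
split => //.
have : `|numq x| * D <= `|N| * D.
  have -> : `|numq x| * D = `|N| * denq x.
    by rewrite -(gtr0_norm D0) -normrM e normrM (gtr0_norm d0).
  by rewrite ler_wpM2l.
by rewrite ler_pM2r.
Qed.

Lemma rat_sq_int (t : rat) (M : int) : t ^+ 2 = M%:~R -> t = (numq t)%:~R.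
Proof.
move=> h.
have d0 := denq_gt0 t.
have e : numq t ^+ 2 = M * denq t ^+ 2.
  apply: (@intr_inj rat); rewrite !expr2 !intrM -expr2 -h.
  have hxe := ratE t.
  move: (numq t) (denq t) d0 hxe => n d d0 ->.
  have : d%:~R != 0 :> rat by rewrite intr_eq0 gt_eqF.
  by move=> hh; field.
have : (denq t %| 1)%Z.
  have : (denq t %| M * denq t ^+ 2)%Z.
    by apply: dvdz_mull; rewrite expr2; apply: dvdz_mull; apply: dvdzz.
  rewrite -e expr2 -(mul1r (numq t * numq t)) Gauss_dvdzl //.
  by rewrite coprimezMr !coprimezE coprime_sym coprime_num_den.
rewrite dvdz1 => /eqP h1.
have dq : denq t = 1 by rewrite -(gtr0_norm d0) -abszE h1.
by rewrite [LHS]ratE dq divr1.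
Qed.

Lemma intrX (RR : pzRingType) (z : int) (n : nat) : (z ^+ n)%:~R = (z%:~R : RR) ^+ n.
Proof. by elim: n => [|n IH]; rewrite ?expr0 // !exprS intrM IH. Qed.

Lemma ln12 (R : realType) : ln (12%:R : R) <= 29%:R / 10%:R.
Proof.
have h : (12%:R : R) <= expR (29%:R / 10%:R).
  have -> : (29%:R / 10%:R : R) = 10%:R * (29%:R / 100%:R) by field.
  rewrite expRM_natl.
  have e1 : 1 + 29%:R / 100%:R <= expR (29%:R / 100%:R : R) := expR_ge1Dx _.
  have e2 : (1 + 29%:R / 100%:R) ^+ 10 <= expR (29%:R / 100%:R : R) ^+ 10.
    by apply: lerXn2r; rewrite ?qualifE //=; lra.
  apply: le_trans e2; lra.
by rewrite -(expRK (29%:R / 10%:R)) ler_ln ?posrE ?expR_gt0.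
Qed.

Theorem corollary3p3 (R : realType) (a1 a2 a3 a4 a6 : int)
    (xP yP xQ yQ : rat) (x1 x2 : int) (s : nat) :
  global_minimal a1 a2 a3 a4 a6 ->
  let A : int := shortA a1 a2 a3 a4 a6 in
  let B : int := shortB a1 a2 a3 a4 a6 in
  let X : int := Num.max (`|A| ^+ 3) (`|B| ^+ 2) in
  on_curve A%:~R B%:~R (Aff xP yP) ->
  on_curve A%:~R B%:~R (Aff xQ yQ) ->
  powR (X%:~R : R) (6%:R^-1) <= ratr xP ->
  xP < xQ ->
  (0 < s)%N ->
  xP = x1%:~R / s%:R ->
  xQ = x2%:~R / s%:R ->
  coprimez x1 s%:Z -> coprimez x2 s%:Z ->
  hpt R (addE A%:~R B%:~R (Aff xP yP) (Aff xQ yQ))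
    <= hpt R (Aff xP yP) + 2 * hpt R (Aff xQ yQ) + 29%:R / 10%:R.
Proof.
move=> _ A B X onP onQ hpow hlt hs hxP hxQ c1 c2.
clearbody A B.
move: onP onQ => /eqP onP /eqP onQ.
set S : int := s%:Z.
have S0 : 0 < S by rewrite ltz_nat.
have eS : (s%:R : rat) = S%:~R by [].
rewrite eS in hxP hxQ.
have SR0 : (S%:~R : rat) != 0 by rewrite intr_eq0 gt_eqF.
have SRp : (0 : rat) < S%:~R by rewrite ltr0z.
have X0 : 0 <= X by rewrite le_max exprn_ge0.
have hX6 : (X%:~R : rat) <= xP ^+ 6.
  have hXR : (X%:~R : R) <= ratr xP ^+ 6.
    have h0 : 0 <= (X%:~R : R) by rewrite ler0z.
    have e6 : (X%:~R : R) = ((X%:~R : R) `^ 6%:R^-1) ^+ 6.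
      by rewrite -powR_mulrn ?powR_ge0 // -powRrM mulVf ?pnatr_eq0 // powRr1.
    rewrite [X in X <= _]e6.
    apply: lerXn2r; rewrite ?qualifE /= ?powR_ge0 //.
    exact: le_trans (powR_ge0 _ _) hpow.
  by rewrite -(ler_rat R) rmorphXn /= ratr_int.
have xP0 : 0 <= xP.
  by rewrite -(ler0q R); exact: le_trans (powR_ge0 _ _) hpow.
set u := xP in hX6 xP0 onP hxP hlt hpow *.
set v := xQ in onQ hxQ hlt *.
set a : rat := A%:~R in onP onQ *.
set b : rat := B%:~R in onP onQ *.
set sg : rat := S%:~R in SR0 SRp hxP hxQ eS *.
have huv : u < v := hlt.
have ha : `|a| <= u ^+ 2.
  rewrite -(@ler_pXn2r _ 3) ?qualifE /= ?exprn_ge0 ?normr_ge0 //.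
  rewrite -exprM /= -normrX /a -intrX -intr_norm.
  apply: le_trans hX6; rewrite ler_int normrX le_max lexx.
  done.
have hb : `|b| <= u ^+ 3.
  rewrite -(@ler_pXn2r _ 2) ?qualifE /= ?exprn_ge0 ?normr_ge0 //.
  rewrite -exprM /= -normrX /b -intrX -intr_norm.
  apply: le_trans hX6; rewrite ler_int normrX le_max lexx orbT //.
have hu2 : 0 <= u ^+ 2 by rewrite exprn_ge0.
have hna : 0 <= `|a| := normr_ge0 a.
have hla : a <= `|a| := ler_norm a.
have hau : a * u <= u ^+ 3 by nra.
have hav : a * v <= u ^+ 2 * v by nra.
have hbb : b <= `|b| /\ -b <= `|b|.
  by split; rewrite ?ler_norm // -normrN ler_norm.
have hyP2 : yP ^+ 2 <= 3%:R * u ^+ 3 by rewrite onP; lra.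
have hv0 : 0 <= v by lra.
have hyQ2 : yQ ^+ 2 <= 3%:R * v ^+ 3.
  rewrite onQ.
  have h0 : u ^+ 2 <= v ^+ 2 by apply: lerXn2r; rewrite ?qualifE //=; lra.
  have h1 : u ^+ 2 * v <= v ^+ 3 by rewrite [v ^+ 3]exprSr; apply: ler_wpM2r.
  have h2 : u ^+ 3 <= v ^+ 3 by apply: lerXn2r; rewrite ?qualifE //=; lra.
  lra.
have hyy : `|yP * yQ| <= 3%:R * u * v ^+ 2.
  rewrite -(@ler_pXn2r _ 2) ?qualifE /= ?normr_ge0 //; last by nra.
  rewrite real_normK ?num_real // exprMn.
  have h1 : 0 <= yP ^+ 2 := sqr_ge0 yP.
  have h2 : 0 <= yQ ^+ 2 := sqr_ge0 yQ.
  have h3 : yP ^+ 2 * yQ ^+ 2 <= (3%:R * u ^+ 3) * (3%:R * v ^+ 3).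
    by apply: ler_pM.
  have h4 : u ^+ 3 * v ^+ 3 <= u ^+ 2 * v ^+ 4.
    have -> : u ^+ 3 * v ^+ 3 = (u ^+ 2 * v ^+ 3) * u by ring.
    have -> : u ^+ 2 * v ^+ 4 = (u ^+ 2 * v ^+ 3) * v by ring.
    apply: ler_wpM2l; first by rewrite mulr_ge0 ?exprn_ge0.
    lra.
  have -> : (3%:R * u * v ^+ 2) ^+ 2 = 9%:R * (u ^+ 2 * v ^+ 4) by ring.
  lra.
rewrite /addE (lt_eqF huv) /=.
set x3 := ((yQ - yP) / (v - u)) ^+ 2 - u - v.
have vu0 : v - u != 0 by rewrite subr_eq0 gt_eqF.
have hx3 : x3 * (v - u) ^+ 2 = u * v * (u + v) + a * (u + v) + 2%:R * b - 2%:R * (yP * yQ).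
  have -> : x3 * (v - u) ^+ 2 = yQ ^+ 2 + yP ^+ 2 - 2%:R * (yP * yQ) - (u + v) * (v - u) ^+ 2.
    by rewrite /x3; field.
  rewrite onP onQ; ring.
have hx3b : `|x3| * (v - u) ^+ 2 <= 12%:R * u * v ^+ 2.
  rewrite -[(v - u) ^+ 2]ger0_norm ?sqr_ge0 // -normrM hx3.
  have hla' : - a <= `|a| by rewrite -normrN ler_norm.
  have hau' : - (a * u) <= u ^+ 3.
    rewrite -mulNr exprSr; apply: le_trans (ler_wpM2r xP0 hla') _.
    by apply: ler_wpM2r.
  have hav' : - (a * v) <= u ^+ 2 * v.
    rewrite -mulNr; apply: le_trans (ler_wpM2r hv0 hla') _.
    by apply: ler_wpM2r.
  have hyy1 : yP * yQ <= `|yP * yQ| := ler_norm _.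
  have hyy2 : - (yP * yQ) <= `|yP * yQ| by rewrite -normrN ler_norm.
  have k1 : u * v * (u + v) <= 2%:R * u * v ^+ 2 by nra.
  have k2 : u ^+ 3 <= u * v ^+ 2 by nra.
  have k3 : u ^+ 2 * v <= u * v ^+ 2 by nra.
  have k4 : 0 <= u * v * (u + v) by nra.
  rewrite ler_norml; apply/andP; split; lra.
have ex1 : x1%:~R = u * sg by rewrite hxP; field.
have ex2 : x2%:~R = v * sg by rewrite hxQ; field.
have x10 : 0 <= x1 by rewrite -(ler_int rat) ex1 mulr_ge0 // ltW.
have x12 : x1 < x2 by rewrite -(ltr_int rat) ex1 ex2 ltr_pM2r.
set M1 : int := x1 ^+ 3 + A * x1 * S ^+ 2 + B * S ^+ 3.
set M2 : int := x2 ^+ 3 + A * x2 * S ^+ 2 + B * S ^+ 3.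
have hM1 : yP ^+ 2 * sg ^+ 3 = M1%:~R.
  by rewrite onP /M1 !intrD !intrX !intrM -/a -/b -/sg hxP; field.
have hM2 : yQ ^+ 2 * sg ^+ 3 = M2%:~R.
  by rewrite onQ /M2 !intrD !intrX !intrM -/a -/b -/sg hxQ; field.
set t := yP * yQ * sg ^+ 3.
have ht : t ^+ 2 = (M1 * M2)%:~R.
  by rewrite intrM -hM1 -hM2 /t; ring.
have hT := rat_sq_int _ _ ht.
set T := numq t in hT.
set N : int := M1 + M2 - 2%:R * T - (x1 + x2) * (x2 - x1) ^+ 2.
set D : int := S * (x2 - x1) ^+ 2.
have D0 : 0 < D by rewrite /D mulr_gt0 // exprn_gt0 // subr_gt0.
have hN : x3 * D%:~R = N%:~R.
  have -> : x3 * D%:~R = yQ ^+ 2 * sg ^+ 3 + yP ^+ 2 * sg ^+ 3 - 2%:R * t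
      - (x1%:~R + x2%:~R) * (x2%:~R - x1%:~R) ^+ 2.
    rewrite /x3 /D intrM intrX intrD intrN -/sg ex1 ex2 /t.
    have : sg * (v - u) != 0 by rewrite mulf_neq0.
    by move=> h; field.
  rewrite hM1 hM2 hT /N !intrD !intrN !intrX !intrM.
  ring.
have [hdD hnN] := rat_den_bound x3 N D D0 hN.
have hNb : `|N| <= 12%:R * x1 * x2 ^+ 2.
  rewrite -(ler_int rat) intr_norm -hN.
  have eD : D%:~R = sg ^+ 3 * (v - u) ^+ 2.
    by rewrite /D intrM intrX intrD intrN ex1 ex2 -/sg; ring.
  rewrite normrM eD [X in _ * X]ger0_norm; last by rewrite mulr_ge0 ?sqr_ge0 ?exprn_ge0 ?(ltW SRp).
  have k : `|x3| * (v - u) ^+ 2 * sg ^+ 3 <= 12%:R * u * v ^+ 2 * sg ^+ 3.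
    by apply: ler_wpM2r; rewrite ?exprn_ge0 ?(ltW SRp).
  rewrite intrM intrX intrM ex1 ex2.
  have -> : (12%:R : int)%:~R = 12%:R :> rat by [].
  have -> : sg ^+ 3 * (v - u) ^+ 2 = (v - u) ^+ 2 * sg ^+ 3 by ring.
  rewrite mulrA; apply: le_trans k _; rewrite le_eqVlt; apply/orP; left; apply/eqP; ring.
have hDb : D <= S * x2 ^+ 2.
  rewrite /D ler_pM2l //. 
  have x20 : 0 <= x2 := le_trans x10 (ltW x12).
  apply: lerXn2r; rewrite ?qualifE /= ?subr_ge0 ?(ltW x12) //.
  by rewrite gerBl.
have x20 : 0 <= x2 := le_trans x10 (ltW x12).
have nu : numq u = x1.
  by rewrite hxP coprimeq_num ?gtr0_sg ?mul1r // -coprimezE.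
have du : denq u = S.
  by rewrite hxP coprimeq_den -?coprimezE // (gt_eqF S0) gtr0_norm.
have nv : numq v = x2.
  by rewrite hxQ coprimeq_num ?gtr0_sg ?mul1r // -coprimezE.
have dv : denq v = S.
  by rewrite hxQ coprimeq_den -?coprimezE // (gt_eqF S0) gtr0_norm.
rewrite /hrat nu du nv dv (ger0_norm x10) (ger0_norm x20).
set m1 : R := Num.max (x1%:~R) (S%:~R).
set m2 : R := Num.max (x2%:~R) (S%:~R).
set K : R := Num.max _ _.
have SR1 : (1 : R) <= S%:~R.
  have h : ((1 : int)%:~R : R) <= S%:~R by rewrite ler_int.
  exact: h.
have x1R : (0 : R) <= x1%:~R by rewrite ler0z.
have x2R : (0 : R) <= x2%:~R by rewrite ler0z.
have x1m : x1%:~R <= m1 by rewrite le_max lexx.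
have x2m : x2%:~R <= m2 by rewrite le_max lexx.
have Sm1 : S%:~R <= m1 by rewrite le_max lexx orbT.
have Sm2 : S%:~R <= m2 by rewrite le_max lexx orbT.
have m1p : 0 < m1 by apply: lt_le_trans Sm1; lra.
have m2p : 0 < m2 by apply: lt_le_trans Sm2; lra.
have B1 : (12%:R * x1%:~R * x2%:~R ^+ 2 : R) <= 12%:R * m1 * m2 ^+ 2.
  rewrite -!mulrA; apply: ler_wpM2l; first lra.
  apply: ler_pM => //; first by rewrite exprn_ge0.
  by apply: lerXn2r; rewrite ?qualifE //=; lra.
have B2 : (S%:~R * x2%:~R ^+ 2 : R) <= 12%:R * m1 * m2 ^+ 2.
  have : (S%:~R * x2%:~R ^+ 2 : R) <= m1 * m2 ^+ 2.
    apply: ler_pM; [lra | by rewrite exprn_ge0 | exact: Sm1 | ].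
    by apply: lerXn2r; rewrite ?qualifE //=; lra.
  have : 0 <= m1 * m2 ^+ 2 by rewrite mulr_ge0 ?exprn_ge0 ?ltW.
  lra.
have hK : K <= 12%:R * m1 * m2 ^+ 2.
  rewrite ge_max; apply/andP; split.
    apply: le_trans B1.
    have : `|numq x3| <= 12%:R * x1 * x2 ^+ 2 := le_trans hnN hNb.
    rewrite -(ler_int R) intrM intrX intrM => h; apply: le_trans h _.
    by rewrite le_eqVlt eqxx.
  apply: le_trans B2.
  have := le_trans hdD hDb.
  by rewrite -(ler_int R) intrM intrX.
have Kp : 0 < K.
  rewrite lt_max; apply/orP; right; rewrite ltr0z; exact: denq_gt0.
have m22 : 0 < m2 ^+ 2 by rewrite exprn_gt0.
apply: le_trans (_ : ln (12%:R * m1 * m2 ^+ 2) <= _).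
  by rewrite ler_ln ?posrE // mulr_gt0 // mulr_gt0.
rewrite lnM ?posrE ?mulr_gt0 // lnM ?posrE // expr2 lnM ?posrE //.
have := ln12 R; lra.
Qed.
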